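(* For every countable $S\subseteq(0;1)$ there is a solid open set $A\subseteq2^\omega$, and also a solid closed set $A\subseteq 2^\omega$, such that $\operatorname{ran}\mathcal{D}_A=S\cup\{0,1\}$ and for every $r\in S$ there is exactly one $z\in2^\omega$ with $\mathcal{D}_A(z)=r$.
   Context: $2^{\omega}$ is the Cantor space; $N_s=\{x\in2^\omega:s\subset x\}$; $\mu$ is the coin-tossing measure, $\mu(N_s)=2^{-\mathrm{lh}(s)}$. For measurable $A$, $\mathcal{D}_A(z)=\lim_n\mu(A\cap N_{z\restriction n})/\mu(N_{z\restriction n})$ when the limit exists; $\operatorname{ran}\mathcal{D}_A$ is the set of values attained where defined. $A$ is solid if $\mathcal{D}_A(z)$ exists for every $z\in2^\omega$. *)

(* Defs.v *)
From Stdlib Require Import Reals List.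
From Coquelicot Require Import Coquelicot.
Open Scope R_scope.

Definition cantor := nat -> bool.

Definition restr (z : cantor) (n : nat) : list bool := map z (seq 0 n).

Definition N (s : list bool) : cantor -> Prop :=
  fun x => forall i : nat, (i < length s)%nat -> x i = nth i s false.

Definition is_open (A : cantor -> Prop) : Prop :=
  forall x, A x -> exists n : nat, forall y, N (restr x n) y -> A y.
Definition is_closed (A : cantor -> Prop) : Prop :=
  is_open (fun x => ~ A x).

(* coin-tossing (Lebesgue) measure, given as the outer measure
   mu(X) = inf { sum_k 2^-lh(s_k) : X is covered by the N_{s_k} }
   (None entries in a cover are empty pieces).  On Borel sets this is the
   unique measure with mu(N_s) = 2^-lh(s). *)
Definition weight (o : option (list bool)) : R :=
  match o with None => 0 | Some s => (/ 2) ^ length s end.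

Definition cover_sums (X : cantor -> Prop) (r : R) : Prop :=
  exists c : nat -> option (list bool),
    (forall x, X x -> exists k s, c k = Some s /\ N s x) /\
    is_series (fun k => weight (c k)) r.

Definition mu (X : cantor -> Prop) : R := real (Glb_Rbar (cover_sums X)).

Definition density_at (A : cantor -> Prop) (z : cantor) (r : R) : Prop :=
  is_lim_seq (fun n : nat =>
     mu (fun x => A x /\ N (restr z n) x) / mu (N (restr z n))) (Finite r).

Definition solid (A : cantor -> Prop) : Prop :=
  forall z, exists r, density_at A z r.

Definition countable_set (S : R -> Prop) : Prop :=
  exists f : nat -> R, forall r, S r -> exists n, f n = r.

Definition good_density (S : R -> Prop) (A : cantor -> Prop) : Prop :=
  (forall r, (exists z, density_at A z r) <-> (S r \/ r = 0 \/ r = 1)) /\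
  (forall r, S r -> exists! z, density_at A z r).

(* Main.v *)
Require Import Defs.
From Stdlib Require Import Reals.
From Coquelicot Require Import Coquelicot.
Open Scope R_scope.
From Stdlib Require Import Lra Lia List Arith ClassicalEpsilon Classical FunctionalExtensionality.
From Coquelicot Require Import Coquelicot.
Require Import Defs.
Open Scope R_scope.

Definition Cyl (y : cantor) (L : nat) : cantor -> Prop :=
  fun x => forall i, (i < L)%nat -> x i = y i.

Lemma restr_length z n : length (restr z n) = n.
Proof. unfold restr. rewrite length_map, length_seq. reflexivity. Qed.

Lemma restr_nth z n i : (i < n)%nat -> nth i (restr z n) false = z i.
Proof.
  intro H. unfold restr.
  rewrite (nth_indep _ false (z 0%nat)) by (rewrite length_map, length_seq; exact H).
  rewrite map_nth, seq_nth by exact H. reflexivity.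
Qed.

Lemma N_restr z n y : N (restr z n) y <-> Cyl z n y.
Proof.
  unfold N, Cyl. rewrite restr_length. split; intros H i Hi; rewrite H by exact Hi;
  rewrite restr_nth by exact Hi; reflexivity.
Qed.

Lemma is_series_R (a : nat -> R) (l : R) : is_lim_seq (sum_n a) l -> is_series a l.
Proof. intro H. exact H. Qed.
Lemma is_series_R' (a : nat -> R) (l : R) : is_series a l -> is_lim_seq (sum_n a) l.
Proof. intro H. exact H. Qed.

Lemma is_series_eqv (a : nat -> R) (l1 l2 : R) : l1 = l2 -> is_series a l1 -> is_series a l2.
Proof. intros ->; auto. Qed.

Lemma sum_n_zero N : sum_n (fun _ : nat => 0) N = 0.
Proof.
  induction N. rewrite sum_O; reflexivity.
  rewrite sum_Sn, IHN. change (0 + 0 = 0). lra.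
Qed.

Lemma is_series_zero : is_series (fun _ : nat => 0) 0.
Proof.
  apply is_series_R. eapply is_lim_seq_ext. intro n. symmetry. apply sum_n_zero.
  apply is_lim_seq_const.
Qed.

Lemma is_series_single (w : R) :
  is_series (fun k => match k with O => w | S _ => 0 end) w.
Proof.
  apply is_series_decr_1. simpl.
  eapply is_series_eqv; [|apply is_series_zero]. change (0 = w + - w). lra.
Qed.

Lemma sum_n_nonneg_le (a : nat -> R) l N :
  is_series a l -> (forall n, 0 <= a n) -> sum_n a N <= l.
Proof.
  intros H Hpos.
  assert (Hm : forall n, sum_n a N <= sum_n a (n + N)).
  { induction n. simpl. lra. simpl. rewrite sum_Sn. change (plus ?x ?y) with (x + y).
    specialize (Hpos (S (n + N))). lra. }
  apply is_series_R' in H.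
  apply (is_lim_seq_incr_n _ N) in H.
  pose proof (is_lim_seq_le (fun _ => sum_n a N) _ _ _ Hm (is_lim_seq_const _) H).
  simpl in H0. exact H0.
Qed.

Lemma series_nonneg (a : nat -> R) l : is_series a l -> (forall n, 0 <= a n) -> 0 <= l.
Proof.
  intros H Hp. pose proof (sum_n_nonneg_le a l 0 H Hp). rewrite sum_O in H0.
  specialize (Hp 0%nat). lra.
Qed.

Fixpoint fsum (f : nat -> R) (J : nat) : R :=
  match J with O => 0 | S J => fsum f J + f J end.

Lemma fsum_sum_n f N : fsum f (S N) = sum_n f N.
Proof.
  induction N. simpl. rewrite sum_O. lra.
  rewrite sum_Sn. change (plus ?x ?y) with (x + y). rewrite <- IHN. simpl. reflexivity.
Qed.

Lemma fsum_nonneg f J : (forall j, 0 <= f j) -> 0 <= fsum f J.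
Proof. intro H. induction J; simpl. lra. specialize (H J). lra. Qed.

Lemma fsum_mono_J f J J' : (forall j, 0 <= f j) -> (J <= J')%nat -> fsum f J <= fsum f J'.
Proof.
  intros H HJ. induction HJ. lra. simpl. specialize (H m). lra.
Qed.

Lemma fsum_le f g J : (forall j, (j < J)%nat -> f j <= g j) -> fsum f J <= fsum g J.
Proof.
  induction J; simpl; intros H. lra.
  assert (fsum f J <= fsum g J) by (apply IHJ; intros; apply H; lia).
  specialize (H J ltac:(lia)). lra.
Qed.

Lemma fsum_plus f g J : fsum (fun j => f j + g j) J = fsum f J + fsum g J.
Proof. induction J; simpl. lra. rewrite IHJ. lra. Qed.

Lemma fsum_term f J j : (forall j, 0 <= f j) -> (j < J)%nat -> f j <= fsum f J.
Proof.
  intros H Hj. induction J. lia. simpl.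
  destruct (Nat.eq_dec j J). subst. pose proof (fsum_nonneg f J H). lra.
  assert (f j <= fsum f J) by (apply IHJ; lia). specialize (H J). lra.
Qed.

Lemma fsum_le_series (a : nat -> R) l J :
  is_series a l -> (forall n, 0 <= a n) -> fsum a J <= l.
Proof.
  intros H Hp. destruct J. simpl. apply (series_nonneg a l H Hp).
  rewrite fsum_sum_n. apply sum_n_nonneg_le; assumption.
Qed.

Definition spread (a : nat -> R) (k : nat) : R :=
  if Nat.even k then a (Nat.div2 k) else 0.

Lemma spread_even a m : spread a (2 * m) = a m.
Proof. unfold spread. rewrite Nat.even_mul, Nat.div2_double. reflexivity. Qed.
Lemma spread_odd a m : spread a (S (2 * m)) = 0.
Proof. unfold spread. rewrite Nat.even_succ, Nat.odd_mul. reflexivity. Qed.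

Lemma sum_spread a N : sum_n (spread a) N = sum_n a (Nat.div2 N).
Proof.
  assert (H : forall m, sum_n (spread a) (2 * m) = sum_n a m /\
                        sum_n (spread a) (S (2 * m)) = sum_n a m).
  { induction m.
    - simpl. rewrite sum_Sn, !sum_O.
      pose proof (spread_even a 0) as E0. pose proof (spread_odd a 0) as E1. simpl in E0, E1.
      rewrite E0, E1. change (plus ?x ?y) with (x + y). split; lra.
    - destruct IHm as [H1 H2].
      assert (E : sum_n (spread a) (2 * S m) = sum_n a (S m)).
      { replace (2 * S m)%nat with (S (S (2 * m))) by lia.
        rewrite sum_Sn, H2, sum_Sn. f_equal.
        replace (S (S (2 * m))) with (2 * S m)%nat by lia. apply spread_even. }
      split. exact E. rewrite sum_Sn, E, spread_odd. change (plus ?x ?y) with (x + y). lra. }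
  destruct (Nat.Even_or_Odd N) as [[m ->]|[m ->]].
  rewrite Nat.div2_double. apply H.
  replace (2 * m + 1)%nat with (S (2 * m)) by lia. rewrite Nat.div2_succ_double. apply H.
Qed.

Lemma filterlim_div2 : filterlim Nat.div2 eventually eventually.
Proof.
  intros P [N HN]. exists (2 * N)%nat. intros n Hn. apply HN.
  rewrite Nat.div2_div. apply Nat.div_le_lower_bound. lia. lia.
Qed.

Lemma is_series_spread a l : is_series a l -> is_series (spread a) l.
Proof.
  intro H. apply is_series_R. eapply is_lim_seq_ext.
  intro n. symmetry. apply sum_spread.
  apply (is_lim_seq_subseq (sum_n a) l Nat.div2 filterlim_div2). exact H.
Qed.

Definition spread' (a : nat -> R) (k : nat) : R :=
  match k with O => 0 | S k => spread a k end.

Lemma is_series_spread' a l : is_series a l -> is_series (spread' a) l.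
Proof.
  intro H. apply is_series_decr_1. simpl.
  eapply is_series_eqv; [|apply is_series_spread; exact H].
  change (l = l + - 0). lra.
Qed.

Lemma weight_nonneg o : 0 <= weight o.
Proof. destruct o; simpl. apply pow_le. lra. lra. Qed.

Lemma cover_sums_nonneg X r : cover_sums X r -> 0 <= r.
Proof.
  intros [c [_ H]]. apply (series_nonneg _ _ H). intro; apply weight_nonneg.
Qed.

Lemma cover_single X s : (forall x, X x -> N s x) -> cover_sums X ((/2) ^ length s).
Proof.
  intro H. exists (fun k => match k with O => Some s | S _ => None end). split.
  - intros x Hx. exists O, s. split; auto.
  - eapply is_series_ext. 2: apply is_series_single.
    intros [|n]; reflexivity.
Qed.

Lemma cover_empty X : (forall x, ~ X x) -> cover_sums X 0.
Proof.
  intro H. exists (fun _ => None). split.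
  - intros x Hx. exfalso; exact (H x Hx).
  - apply is_series_zero.
Qed.

Lemma cover_sums_one X : cover_sums X 1.
Proof.
  replace 1 with ((/2) ^ length (@nil bool)) by reflexivity.
  apply cover_single. intros x _ i Hi. simpl in Hi. lia.
Qed.

Lemma mu_finite X : exists g, Glb_Rbar (cover_sums X) = Finite g /\ 0 <= g.
Proof.
  pose proof (Glb_Rbar_correct (cover_sums X)) as [Hlb Hglb].
  assert (H1 := Hlb 1 (cover_sums_one X)).
  assert (H0 : Rbar_le 0 (Glb_Rbar (cover_sums X))).
  { apply Hglb. intros r Hr. simpl. apply (cover_sums_nonneg X r Hr). }
  destruct (Glb_Rbar (cover_sums X)) as [g| |]; simpl in *; try contradiction.
  exists g; split; auto.
Qed.

Lemma mu_nonneg X : 0 <= mu X.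
Proof.
  unfold mu. destruct (mu_finite X) as [g [-> Hg]]. exact Hg.
Qed.

Lemma mu_le X r : cover_sums X r -> mu X <= r.
Proof.
  intro H. unfold mu. destruct (mu_finite X) as [g [Hg _]].
  pose proof (Glb_Rbar_correct (cover_sums X)) as [Hlb _].
  specialize (Hlb r H). rewrite Hg in *. simpl in *. exact Hlb.
Qed.

Lemma mu_ge X a : (forall r, cover_sums X r -> a <= r) -> a <= mu X.
Proof.
  intro H. unfold mu. destruct (mu_finite X) as [g [Hg _]].
  pose proof (Glb_Rbar_correct (cover_sums X)) as [_ Hglb].
  assert (Rbar_le a (Glb_Rbar (cover_sums X))).
  { apply Hglb. intros r Hr. simpl. apply H, Hr. }
  rewrite Hg in *. simpl in *. exact H0.
Qed.

Lemma mu_approx X eps : 0 < eps -> exists r, cover_sums X r /\ r < mu X + eps.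
Proof.
  intro He. apply NNPP. intro Hn.
  assert (mu X + eps <= mu X).
  { apply mu_ge. intros r Hr. destruct (Rle_lt_dec (mu X + eps) r); auto.
    exfalso; apply Hn; exists r; auto. }
  lra.
Qed.

Lemma mu_mono (X Y : cantor -> Prop) : (forall x, X x -> Y x) -> mu X <= mu Y.
Proof.
  intro H. apply mu_ge. intros r [c [Hc Hs]]. apply mu_le. exists c. split; auto.
Qed.

Lemma mu_empty X : (forall x, ~ X x) -> mu X <= 0.
Proof. intro H. apply mu_le, cover_empty, H. Qed.

Lemma mu_Cyl_le x n : mu (Cyl x n) <= (/2) ^ n.
Proof.
  replace ((/2) ^ n) with ((/2) ^ (length (restr x n))) by (rewrite restr_length; reflexivity).
  apply mu_le, cover_single.
  intros y Hy. apply N_restr. exact Hy.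
Qed.

Lemma cover_union X Y rX rY :
  cover_sums X rX -> cover_sums Y rY -> cover_sums (fun x => X x \/ Y x) (rX + rY).
Proof.
  intros [cX [HX SX]] [cY [HY SY]].
  exists (fun k => if Nat.even k then cX (Nat.div2 k) else cY (Nat.div2 k)). split.
  - intros x [Hx|Hx].
    + destruct (HX x Hx) as [k [s [H1 H2]]]. exists (2 * k)%nat, s.
      rewrite Nat.even_mul, Nat.div2_double. simpl. auto.
    + destruct (HY x Hx) as [k [s [H1 H2]]]. exists (S (2 * k))%nat, s.
      rewrite Nat.even_succ, Nat.odd_mul, Nat.div2_succ_double. simpl. auto.
  - eapply is_series_ext.
    2: apply (is_series_plus _ _ _ _ (is_series_spread _ _ SX) (is_series_spread' _ _ SY)).
    intro k. change (plus ?x ?y) with (x + y). unfold spread', spread.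
    destruct (Nat.Even_or_Odd k) as [[m ->]|[m ->]].
    + rewrite Nat.even_mul, Nat.div2_double. destruct m. simpl. lra.
      replace (2 * S m)%nat with (S (S (2 * m))) by lia.
      replace (Nat.even (S (2 * m))) with false.
      simpl. lra. rewrite Nat.even_succ, Nat.odd_mul. reflexivity.
    + replace (2 * m + 1)%nat with (S (2 * m)) by lia.
      rewrite Nat.even_succ, Nat.odd_mul, Nat.even_mul, Nat.div2_succ_double, Nat.div2_double.
      simpl. lra.
Qed.

Lemma mu_union X Y : mu (fun x => X x \/ Y x) <= mu X + mu Y.
Proof.
  apply Rnot_lt_le. intro Hlt.
  set (eps := (mu (fun x => X x \/ Y x) - (mu X + mu Y)) / 2).
  assert (He : 0 < eps) by (unfold eps; lra).
  destruct (mu_approx X eps He) as [rX [HX HrX]].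
  destruct (mu_approx Y eps He) as [rY [HY HrY]].
  pose proof (mu_le _ _ (cover_union X Y rX rY HX HY)). unfold eps in *. lra.
Qed.

Lemma pow_half_le n m : (n <= m)%nat -> (/2) ^ m <= (/2) ^ n.
Proof.
  induction 1. lra. simpl. pose proof (pow_le (/2) m ltac:(lra)). lra.
Qed.

Lemma pow_half_pos n : 0 < (/2) ^ n.
Proof. apply pow_lt. lra. Qed.

Lemma pow_half_S n : (/2) ^ (S n) = (/2) ^ n / 2.
Proof. simpl. lra. Qed.

Lemma Cyl_refl x n : Cyl x n x.
Proof. intros i _; reflexivity. Qed.

Lemma Cyl_weaken x n m y : Cyl x n y -> (m <= n)%nat -> Cyl x m y.
Proof. intros H Hm i Hi. apply H. lia. Qed.

Lemma Cyl_trans x n y z : Cyl x n y -> Cyl y n z -> Cyl x n z.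
Proof. intros H1 H2 i Hi. rewrite H2, H1; auto. Qed.

Lemma Cyl_sym x n y : Cyl x n y -> Cyl y n x.
Proof. intros H i Hi. rewrite H; auto. Qed.

Definition upd (x : cantor) (n : nat) (b : bool) : cantor :=
  fun i => if Nat.eqb i n then b else x i.

Lemma Cyl_upd_child x n b y : Cyl (upd x n b) (S n) y -> Cyl x n y.
Proof.
  intros H i Hi. rewrite H by lia. unfold upd.
  destruct (Nat.eqb_spec i n). lia. reflexivity.
Qed.

Lemma Cyl_upd_self x n y : Cyl x n y -> Cyl (upd x n (y n)) (S n) y.
Proof.
  intros H i Hi. unfold upd. destruct (Nat.eqb_spec i n). subst; reflexivity.
  apply H. lia.
Qed.

Lemma Cyl_upd_bit x n b y : Cyl (upd x n b) (S n) y -> y n = b.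
Proof. intro H. rewrite H by lia. unfold upd. rewrite Nat.eqb_refl. reflexivity. Qed.

Lemma Cyl_upd_base x n b : Cyl x n (upd x n b).
Proof. intros i Hi. unfold upd. destruct (Nat.eqb_spec i n). lia. reflexivity. Qed.

(* ---------- omega: measure of the intersection of two cylinders ---------- *)
Definition compat (s : list bool) (x : cantor) (n : nat) : Prop :=
  forall i, (i < length s)%nat -> (i < n)%nat -> nth i s false = x i.

Definition om (o : option (list bool)) (x : cantor) (n : nat) : R :=
  match o with
  | None => 0
  | Some s => if excluded_middle_informative (compat s x n)
              then (/2) ^ (Nat.max (length s) n) else 0
  end.

Lemma om_nonneg o x n : 0 <= om o x n.
Proof.
  destruct o; simpl. destruct excluded_middle_informative. apply pow_le; lra. lra. lra.
Qed.

Lemma om_le_weight o x n : om o x n <= weight o.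
Proof.
  destruct o; simpl. destruct excluded_middle_informative.
  apply pow_half_le. lia. apply pow_le; lra. lra.
Qed.

Lemma om_split o x n :
  om o x n = om o (upd x n false) (S n) + om o (upd x n true) (S n).
Proof.
  destruct o as [s|]; simpl; [|lra].
  destruct (le_lt_dec (length s) n) as [Hle|Hlt].
  - replace (Nat.max (length s) n) with n by lia.
    replace (Nat.max (length s) (S n)) with (S n) by lia.
    assert (E : forall b, compat s (upd x n b) (S n) <-> compat s x n).
    { intro b. unfold compat, upd. split; intros H i Hi1 Hi2.
      - specialize (H i Hi1 ltac:(lia)). destruct (Nat.eqb_spec i n). lia. exact H.
      - destruct (Nat.eqb_spec i n). lia. apply H; lia. }
    destruct (excluded_middle_informative (compat s x n)) as [P|P];
    destruct (excluded_middle_informative (compat s (upd x n false) (S n))) as [P0|P0];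
    destruct (excluded_middle_informative (compat s (upd x n true) (S n))) as [P1|P1];
    try (rewrite E in P0); try (rewrite E in P1); try tauto.
    simpl. lra. lra.
  - replace (Nat.max (length s) n) with (length s) by lia.
    replace (Nat.max (length s) (S n)) with (length s) by lia.
    assert (E : forall b, compat s (upd x n b) (S n) <-> compat s x n /\ nth n s false = b).
    { intro b. unfold compat, upd. split.
      - intros H. split.
        + intros i Hi1 Hi2. specialize (H i Hi1 ltac:(lia)). destruct (Nat.eqb_spec i n). lia. exact H.
        + specialize (H n Hlt ltac:(lia)). rewrite Nat.eqb_refl in H. exact H.
      - intros [H Hb] i Hi1 Hi2. destruct (Nat.eqb_spec i n) as [->|]. exact Hb. apply H; lia. }
    destruct (excluded_middle_informative (compat s x n)) as [P|P];
    destruct (excluded_middle_informative (compat s (upd x n false) (S n))) as [P0|P0];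
    destruct (excluded_middle_informative (compat s (upd x n true) (S n))) as [P1|P1];
    try (rewrite E in P0); try (rewrite E in P1).
    all: try lra; exfalso; first [tauto | destruct P0 as [_ A], P1 as [_ B]; congruence
      | destruct (nth n s false); [apply P1 | apply P0]; auto].
Qed.

Lemma fsum_ext f g J : (forall j, f j = g j) -> fsum f J = fsum g J.
Proof. intro H. induction J; simpl. lra. rewrite IHJ, H. lra. Qed.

Lemma fsum_om_split c x n J :
  fsum (fun j => om (c j) x n) J =
  fsum (fun j => om (c j) (upd x n false) (S n)) J +
  fsum (fun j => om (c j) (upd x n true) (S n)) J.
Proof.
  rewrite <- fsum_plus. apply fsum_ext. intro j. apply om_split.
Qed.

Definition covJ (c : nat -> option (list bool)) (J : nat) (z : cantor) : Prop :=
  exists j s, (j < J)%nat /\ c j = Some s /\ N s z.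

Lemma cyl_fin_lb c J d : forall x n,
  (forall j s, (j < J)%nat -> c j = Some s -> (length s <= n + d)%nat) ->
  (forall z, Cyl x n z -> covJ c J z) ->
  (/2) ^ n <= fsum (fun j => om (c j) x n) J.
Proof.
  induction d; intros x n Hlen Hcov.
  - destruct (Hcov x (Cyl_refl x n)) as [j [s [Hj [Hc HN]]]].
    eapply Rle_trans; [|apply (fsum_term (fun j => om (c j) x n) J j); [intro; apply om_nonneg|exact Hj]].
    rewrite Hc. simpl. specialize (Hlen j s Hj Hc).
    destruct excluded_middle_informative as [P|P].
    + replace (Nat.max (length s) n) with n by lia. lra.
    + exfalso; apply P. intros i Hi _. symmetry. apply HN, Hi.
  - rewrite fsum_om_split.
    assert (H : forall b, (/2) ^ (S n) <= fsum (fun j => om (c j) (upd x n b) (S n)) J).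
    { intro b. apply IHd.
      - intros j s Hj Hc. specialize (Hlen j s Hj Hc). lia.
      - intros z Hz. apply Hcov. eapply Cyl_upd_child; eauto. }
    pose proof (H false). pose proof (H true). rewrite pow_half_S in *. lra.
Qed.

Lemma covJ_mono c J J' z : (J <= J')%nat -> covJ c J z -> covJ c J' z.
Proof. intros H [j [s [Hj R]]]. exists j, s. split; [lia|exact R]. Qed.

Lemma len_bound (c : nat -> option (list bool)) J :
  exists L, forall j s, (j < J)%nat -> c j = Some s -> (length s <= L)%nat.
Proof.
  induction J. exists O. intros; lia.
  destruct IHJ as [L HL].
  exists (Nat.max L (match c J with Some s => length s | None => O end)).
  intros j s Hj Hc. destruct (Nat.eq_dec j J).
  - subst. rewrite Hc. lia.
  - specialize (HL j s ltac:(lia) Hc). lia.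
Qed.

Lemma cyl_compact c x n :
  (forall z, Cyl x n z -> exists j s, c j = Some s /\ N s z) ->
  exists J, forall z, Cyl x n z -> covJ c J z.
Proof.
  intro Hcov. apply NNPP. intro Hn.
  set (Bad := fun y m => forall J, exists z, Cyl y m z /\ ~ covJ c J z).
  assert (B0 : Bad x n).
  { intro J. apply NNPP. intro H. apply Hn. exists J. intros z Hz.
    apply NNPP. intro H2. apply H. exists z. auto. }
  assert (Bstep : forall y m, Bad y m -> Bad (upd y m false) (S m) \/ Bad (upd y m true) (S m)).
  { intros y m HB. apply NNPP. intro H. apply not_or_and in H. destruct H as [H0 H1].
    assert (G : forall b, ~ Bad (upd y m b) (S m) ->
              exists J, forall z, Cyl (upd y m b) (S m) z -> covJ c J z).
    { intros b Hb. apply NNPP. intro H. apply Hb. intro J. apply NNPP. intro H'.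
      apply H. exists J. intros z Hz. apply NNPP. intro H''. apply H'. exists z; auto. }
    destruct (G false H0) as [J0 HJ0]. destruct (G true H1) as [J1 HJ1].
    destruct (HB (J0 + J1)%nat) as [z [Hz Hnc]]. apply Hnc.
    pose proof (Cyl_upd_self y m z Hz) as Hz'.
    destruct (z m).
    - eapply covJ_mono; [|apply HJ1, Hz']. lia.
    - eapply covJ_mono; [|apply HJ0, Hz']. lia. }
  set (next := fun y m => if excluded_middle_informative (Bad (upd y m false) (S m))
                          then upd y m false else upd y m true).
  set (g := fix g k := match k with O => x | S k => next (g k) (n + k)%nat end).
  assert (Hg : forall k, Bad (g k) (n + k)%nat).
  { induction k. simpl. rewrite Nat.add_0_r. exact B0.
    simpl. unfold next. destruct excluded_middle_informative as [P|P].
    rewrite Nat.add_succ_r. exact P.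
    rewrite Nat.add_succ_r. destruct (Bstep _ _ IHk); tauto. }
  assert (Hstep : forall k i, (i < n + k)%nat -> g (S k) i = g k i).
  { intros k i Hi. simpl. unfold next. destruct excluded_middle_informative;
    unfold upd; destruct (Nat.eqb_spec i (n + k)); try lia; reflexivity. }
  assert (Hagree : forall k k', (k <= k')%nat -> forall i, (i < n + k)%nat -> g k' i = g k i).
  { intros k k' H. induction H. reflexivity. intros i Hi. rewrite Hstep by lia. apply IHle; auto. }
  set (z := fun i => g (S i) i).
  assert (Hz : forall k i, (i < n + k)%nat -> z i = g k i).
  { intros k i Hi. unfold z. destruct (le_lt_dec (S i) k).
    - symmetry. apply Hagree. auto. lia.
    - apply Hagree. lia. auto. }
  assert (HzC : Cyl x n z).
  { intros i Hi. rewrite (Hz O i) by lia. reflexivity. }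
  destruct (Hcov z HzC) as [j [s [Hc HN]]].
  destruct (Hg (length s) (S j)) as [z' [Hz' Hnc]]. apply Hnc.
  exists j, s. split. lia. split. exact Hc.
  intros i Hi. rewrite Hz' by lia. rewrite <- (Hz (length s) i) by lia. apply HN, Hi.
Qed.

Lemma cyl_cover_lb c x n :
  (forall z, Cyl x n z -> exists j s, c j = Some s /\ N s z) ->
  exists J, (/2) ^ n <= fsum (fun j => om (c j) x n) J.
Proof.
  intro H. destruct (cyl_compact c x n H) as [J HJ]. exists J.
  destruct (len_bound c J) as [L HL].
  apply (cyl_fin_lb c J L). intros j s Hj Hc. specialize (HL j s Hj Hc). lia. exact HJ.
Qed.

Lemma fsum_om_le_series c r J x n :
  is_series (fun k => weight (c k)) r -> fsum (fun j => om (c j) x n) J <= r.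
Proof.
  intro H. eapply Rle_trans. apply fsum_le. intros j _. apply (om_le_weight (c j) x n).
  apply fsum_le_series. exact H. intro; apply weight_nonneg.
Qed.

Lemma mu_Cyl_ge x n : (/2) ^ n <= mu (Cyl x n).
Proof.
  apply mu_ge. intros r [c [Hc Hs]].
  destruct (cyl_cover_lb c x n) as [J HJ]. intros z Hz. apply Hc, Hz.
  eapply Rle_trans. exact HJ. eapply fsum_om_le_series; eauto.
Qed.

Lemma mu_Cyl x n : mu (Cyl x n) = (/2) ^ n.
Proof. apply Rle_antisym. apply mu_Cyl_le. apply mu_Cyl_ge. Qed.

Lemma mu_N_restr z n : mu (N (restr z n)) = (/2) ^ n.
Proof.
  rewrite <- (mu_Cyl z n). apply Rle_antisym; apply mu_mono; intros y Hy; apply N_restr; auto.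
Qed.

Section Auto.
Variable St : Type.
Variable init : St.
Variable trans : St -> bool -> St.
Variable out : St -> option bool.
Hypothesis Hher : forall s c b, out s = Some b -> out (trans s c) = Some b.

Fixpoint st (y : cantor) (m : nat) : St :=
  match m with O => init | S m => trans (st y m) (y m) end.

Lemma st_local x y n : Cyl x n y -> st y n = st x n.
Proof.
  induction n; intro H; simpl. reflexivity.
  rewrite IHn by (eapply Cyl_weaken; eauto). rewrite H by lia. reflexivity.
Qed.

Lemma st_upd x n b : st (upd x n b) (S n) = trans (st x n) b.
Proof.
  simpl. rewrite (st_local x (upd x n b) n (Cyl_upd_base x n b)).
  unfold upd. rewrite Nat.eqb_refl. reflexivity.
Qed.

Lemma out_her_m y n m b : out (st y n) = Some b -> (n <= m)%nat -> out (st y m) = Some b.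
Proof. intros H Hm. induction Hm. exact H. simpl. apply Hher. exact IHHm. Qed.

Lemma out_her x n b y m : out (st x n) = Some b -> Cyl x n y -> (n <= m)%nat -> out (st y m) = Some b.
Proof.
  intros H Hc Hm. apply (out_her_m y n m b); auto. rewrite (st_local x y n Hc). exact H.
Qed.

Fixpoint LB (s : St) (k : nat) : R :=
  match k with
  | O => match out s with Some true => 1 | _ => 0 end
  | S k => match out s with
           | Some true => 1 | Some false => 0
           | None => (LB (trans s false) k + LB (trans s true) k) / 2 end
  end.

Fixpoint UB (s : St) (k : nat) : R :=
  match k with
  | O => match out s with Some false => 0 | _ => 1 end
  | S k => match out s with
           | Some true => 1 | Some false => 0
           | None => (UB (trans s false) k + UB (trans s true) k) / 2 end
  end.

Lemma LB_true s k : out s = Some true -> LB s k = 1.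
Proof. intro H. destruct k; simpl; rewrite H; reflexivity. Qed.
Lemma LB_false s k : out s = Some false -> LB s k = 0.
Proof. intro H. destruct k; simpl; rewrite H; reflexivity. Qed.
Lemma UB_true s k : out s = Some true -> UB s k = 1.
Proof. intro H. destruct k; simpl; rewrite H; reflexivity. Qed.
Lemma UB_false s k : out s = Some false -> UB s k = 0.
Proof. intro H. destruct k; simpl; rewrite H; reflexivity. Qed.

Lemma tree_lb c : forall k x n,
  (forall y, Cyl x n y -> out (st y (n + k)) = Some true -> exists j s, c j = Some s /\ N s y) ->
  exists J, (/2) ^ n * LB (st x n) k <= fsum (fun j => om (c j) x n) J.
Proof.
  induction k; intros x n Hcov.
  - destruct (out (st x n)) as [[|]|] eqn:Ho.
    + rewrite LB_true by exact Ho. rewrite Rmult_1_r.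
      apply cyl_cover_lb. intros z Hz. apply Hcov. exact Hz.
      apply (out_her x n true z (n + 0)); auto; lia.
    + exists O. rewrite LB_false by exact Ho. simpl. lra.
    + exists O. simpl. rewrite Ho. simpl. lra.
  - destruct (out (st x n)) as [[|]|] eqn:Ho.
    + rewrite LB_true by exact Ho. rewrite Rmult_1_r.
      apply cyl_cover_lb. intros z Hz. apply Hcov. exact Hz.
      apply (out_her x n true z (n + S k)); auto; lia.
    + exists O. rewrite LB_false by exact Ho. simpl. lra.
    + assert (H : forall b, exists J, (/2) ^ (S n) * LB (st (upd x n b) (S n)) k <=
                     fsum (fun j => om (c j) (upd x n b) (S n)) J).
      { intro b. apply IHk. intros y Hy Hout. apply Hcov. eapply Cyl_upd_child; eauto.
        rewrite Nat.add_succ_r. exact Hout. }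
      destruct (H false) as [J0 H0]. destruct (H true) as [J1 H1].
      rewrite !st_upd in *.
      exists (J0 + J1)%nat. simpl LB. rewrite Ho. rewrite fsum_om_split.
      assert (fsum (fun j => om (c j) (upd x n false) (S n)) J0 <=
              fsum (fun j => om (c j) (upd x n false) (S n)) (J0 + J1)).
      { apply fsum_mono_J. intro; apply om_nonneg. lia. }
      assert (fsum (fun j => om (c j) (upd x n true) (S n)) J1 <=
              fsum (fun j => om (c j) (upd x n true) (S n)) (J0 + J1)).
      { apply fsum_mono_J. intro; apply om_nonneg. lia. }
      rewrite pow_half_S in H0, H1. lra.
Qed.

Lemma lower_bound (Y : cantor -> Prop) x n k :
  (forall y, Cyl x n y -> out (st y (n + k)) = Some true -> Y y) ->
  (/2) ^ n * LB (st x n) k <= mu Y.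
Proof.
  intro HY. apply mu_ge. intros r [c [Hc Hs]].
  destruct (tree_lb c k x n) as [J HJ].
  { intros y Hy Ho. apply Hc. apply HY; auto. }
  eapply Rle_trans. exact HJ. eapply fsum_om_le_series; eauto.
Qed.

Lemma upper_bound (Y : cantor -> Prop) : forall k x n,
  (forall y, Cyl x n y -> Y y -> out (st y (n + k)) <> Some false) ->
  mu (fun y => Y y /\ Cyl x n y) <= (/2) ^ n * UB (st x n) k.
Proof.
  induction k; intros x n HY.
  - destruct (out (st x n)) as [[|]|] eqn:Ho.
    + rewrite UB_true by exact Ho. rewrite Rmult_1_r.
      eapply Rle_trans; [|apply (mu_Cyl_le x n)]. apply mu_mono. tauto.
    + rewrite UB_false by exact Ho. rewrite Rmult_0_r. apply mu_empty.
      intros y [H1 H2]. apply (HY y H2 H1). apply (out_her x n false y); auto. lia.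
    + simpl. rewrite Ho. rewrite Rmult_1_r.
      eapply Rle_trans; [|apply (mu_Cyl_le x n)]. apply mu_mono. tauto.
  - destruct (out (st x n)) as [[|]|] eqn:Ho.
    + rewrite UB_true by exact Ho. rewrite Rmult_1_r.
      eapply Rle_trans; [|apply (mu_Cyl_le x n)]. apply mu_mono. tauto.
    + rewrite UB_false by exact Ho. rewrite Rmult_0_r. apply mu_empty.
      intros y [H1 H2]. apply (HY y H2 H1). apply (out_her x n false y); auto. lia.
    + assert (H : forall b, mu (fun y => Y y /\ Cyl (upd x n b) (S n) y) <=
                     (/2) ^ (S n) * UB (st (upd x n b) (S n)) k).
      { intro b. apply IHk. intros y Hy HYy. replace (S n + k)%nat with (n + S k)%nat by lia.
        apply HY; auto. eapply Cyl_upd_child; eauto. }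
      pose proof (H false) as H0. pose proof (H true) as H1. rewrite !st_upd in *.
      eapply Rle_trans.
      apply (mu_mono _ (fun y => (Y y /\ Cyl (upd x n false) (S n) y) \/
                                 (Y y /\ Cyl (upd x n true) (S n) y))).
      { intros y [HYy Hy]. pose proof (Cyl_upd_self x n y Hy).
        destruct (y n); [right|left]; auto. }
      eapply Rle_trans. apply mu_union.
      simpl UB. rewrite Ho. rewrite pow_half_S in H0, H1. lra.
Qed.

Lemma LB_nonneg s k : 0 <= LB s k.
Proof.
  revert s; induction k; intro s; simpl; destruct (out s) as [[|]|]; try lra.
  pose proof (IHk (trans s false)); pose proof (IHk (trans s true)); lra.
Qed.

End Auto.

Fixpoint tseq (r : R) (i : nat) : R :=
  match i with
  | O => 0
  | S i => if Rle_dec (tseq r i + (/2) ^ (S i)) r then tseq r i + (/2) ^ (S i) else tseq r i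
  end.

Definition digit (r : R) (i : nat) : bool :=
  if Rle_dec (tseq r i + (/2) ^ (S i)) r then true else false.

Lemma tseq_S r i : tseq r (S i) = tseq r i + (if digit r i then (/2) ^ (S i) else 0).
Proof. simpl. unfold digit. destruct Rle_dec; lra. Qed.

Lemma tseq_bounds r i : 0 <= r < 1 -> tseq r i <= r < tseq r i + (/2) ^ i.
Proof.
  intro Hr. induction i. simpl. lra.
  rewrite tseq_S. unfold digit. rewrite pow_half_S.
  destruct Rle_dec; lra.
Qed.

Lemma tseq_mono r i j : (i <= j)%nat -> tseq r i <= tseq r j.
Proof.
  induction 1. lra. rewrite tseq_S. destruct digit.
  pose proof (pow_half_pos (S m)). lra. lra.
Qed.

Inductive stt := Zs (n : nat) | Sh (n j : nat) | Cm (n j i : nat) | Dn (b : bool).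

Definition tr (act : nat -> bool) (rr : nat -> R) (s : stt) (c : bool) : stt :=
  match s with
  | Zs n => if c then (match n with O => Dn true | S _ => if act n then Sh n O else Dn false end)
            else Zs (S n)
  | Sh n j => if c then (if Nat.leb j n then Dn false else Cm n j O) else Sh n (S j)
  | Cm n j i =>
      let nxt := if Nat.eqb (S i) j then Dn false else Cm n j (S i) in
      if digit (rr n) i then (if c then nxt else Dn true) else (if c then Dn false else nxt)
  | Dn b => Dn b
  end.

Definition outp (s : stt) : option bool := match s with Dn b => Some b | _ => None end.

Lemma outp_her act rr s c b : outp s = Some b -> outp (tr act rr s c) = Some b.
Proof. destruct s; simpl; try discriminate. auto. Qed.

Section Bounds.
Variable act : nat -> bool.
Variable rr : nat -> R.

Definition LBs := LB stt (tr act rr) outp.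
Definition UBs := UB stt (tr act rr) outp.

Lemma UB_le1 s k : UBs s k <= 1.
Proof.
  unfold UBs. revert s; induction k; intro s; simpl; destruct (outp s) as [[|]|]; try lra.
  pose proof (IHk (tr act rr s false)); pose proof (IHk (tr act rr s true)); lra.
Qed.

Lemma UB_nonneg s k : 0 <= UBs s k.
Proof.
  unfold UBs. revert s; induction k; intro s; simpl; destruct (outp s) as [[|]|]; try lra.
  pose proof (IHk (tr act rr s false)); pose proof (IHk (tr act rr s true)); lra.
Qed.

Definition Aq n j i := (tseq (rr n) j - tseq (rr n) i) / (/2) ^ i.

Lemma Aq_step n j i :
  Aq n j (S i) = if digit (rr n) i then 2 * Aq n j i - 1 else 2 * Aq n j i.
Proof.
  unfold Aq. rewrite tseq_S. pose proof (pow_half_pos i).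
  rewrite pow_half_S. destruct digit; field; lra.
Qed.

Lemma Aq_bounds n j i : 0 <= rr n < 1 -> (i <= j)%nat -> 0 <= Aq n j i < 1.
Proof.
  intros Hr Hij. unfold Aq. pose proof (pow_half_pos i).
  pose proof (tseq_mono (rr n) i j Hij). pose proof (tseq_bounds (rr n) i Hr).
  pose proof (tseq_bounds (rr n) j Hr).
  split. apply Rdiv_le_0_compat; lra.
  apply (Rmult_lt_reg_r ((/2) ^ i)); auto. unfold Rdiv. rewrite Rmult_assoc, Rinv_l by lra. lra.
Qed.

Lemma Aq_jj n j : Aq n j j = 0.
Proof. unfold Aq. unfold Rminus. rewrite Rplus_opp_r. unfold Rdiv. ring. Qed.

Lemma Aq_0 n j : Aq n j 0 = tseq (rr n) j.
Proof. unfold Aq. simpl. field. Qed.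

Lemma LB_unfold s k : outp s = None ->
  LBs s (S k) = (LBs (tr act rr s false) k + LBs (tr act rr s true) k) / 2.
Proof. intro H. unfold LBs. simpl. rewrite H. reflexivity. Qed.
Lemma UB_unfold s k : outp s = None ->
  UBs s (S k) = (UBs (tr act rr s false) k + UBs (tr act rr s true) k) / 2.
Proof. intro H. unfold UBs. simpl. rewrite H. reflexivity. Qed.
Lemma LB_Dn b k : LBs (Dn b) k = if b then 1 else 0.
Proof. unfold LBs. destruct k, b; reflexivity. Qed.
Lemma UB_Dn b k : UBs (Dn b) k = if b then 1 else 0.
Proof. unfold UBs. destruct k, b; reflexivity. Qed.

Lemma tr_Cm n j i c : tr act rr (Cm n j i) c =
  if digit (rr n) i then (if c then (if Nat.eqb (S i) j then Dn false else Cm n j (S i)) else Dn true)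
  else (if c then Dn false else (if Nat.eqb (S i) j then Dn false else Cm n j (S i))).
Proof. reflexivity. Qed.

Lemma Cm_bounds n j : 0 <= rr n < 1 -> forall k i, (i < j)%nat ->
  Aq n j i - (/2) ^ k <= LBs (Cm n j i) k /\ UBs (Cm n j i) k <= Aq n j i + (/2) ^ k.
Proof.
  intros Hr k. induction k; intros i Hij.
  - pose proof (Aq_bounds n j i Hr ltac:(lia)). unfold LBs, UBs. simpl. lra.
  - rewrite LB_unfold, UB_unfold by reflexivity.
    assert (Hn : Aq n j (S i) - (/2) ^ k <=
                 LBs (if Nat.eqb (S i) j then Dn false else Cm n j (S i)) k /\
                 UBs (if Nat.eqb (S i) j then Dn false else Cm n j (S i)) k <=
                 Aq n j (S i) + (/2) ^ k).
    { destruct (Nat.eqb_spec (S i) j).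
      - subst. rewrite Aq_jj, LB_Dn, UB_Dn. pose proof (pow_half_pos k). lra.
      - apply IHk. lia. }
    pose proof (Aq_step n j i) as Hs.
    rewrite pow_half_S. rewrite !tr_Cm.
    set (nxt := if Nat.eqb (S i) j then Dn false else Cm n j (S i)) in *.
    destruct (digit (rr n) i); rewrite ?LB_Dn, ?UB_Dn; pose proof (pow_half_pos k); lra.
Qed.

Definition Ek (k : nat) : R := INR (S k) * (/2) ^ k.

Lemma Ek_S k : Ek (S k) = (Ek k + (/2) ^ k) / 2.
Proof. unfold Ek. rewrite (S_INR (S k)). rewrite pow_half_S. lra. Qed.

Lemma Ek_nonneg k : 0 <= Ek k.
Proof. unfold Ek. apply Rmult_le_pos. apply pos_INR. apply pow_le; lra. Qed.

Lemma Sh_ub n : 0 <= rr n < 1 -> forall k j, UBs (Sh n j) k <= rr n + Ek k.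
Proof.
  intros Hr k. induction k; intro j.
  - unfold UBs, Ek. simpl. lra.
  - rewrite UB_unfold by reflexivity. rewrite Ek_S. simpl tr.
    pose proof (IHk (S j)).
    assert (UBs (if Nat.leb j n then Dn false else Cm n j 0) k <= rr n + (/2) ^ k).
    { destruct (Nat.leb_spec j n).
      - rewrite UB_Dn. pose proof (pow_half_pos k). lra.
      - destruct (Cm_bounds n j Hr k 0 ltac:(lia)) as [_ H2]. rewrite Aq_0 in H2.
        pose proof (tseq_bounds (rr n) j Hr). lra. }
    lra.
Qed.

Lemma Sh_lb n : 0 <= rr n < 1 -> forall k j, (n < j)%nat ->
  rr n - (/2) ^ j - Ek k <= LBs (Sh n j) k.
Proof.
  intros Hr k. induction k; intros j Hj.
  - unfold LBs, Ek. simpl. pose proof (pow_half_pos j). lra.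
  - rewrite LB_unfold by reflexivity. rewrite Ek_S. simpl tr.
    pose proof (IHk (S j) ltac:(lia)).
    destruct (Nat.leb_spec j n). lia.
    destruct (Cm_bounds n j Hr k 0 ltac:(lia)) as [H2 _]. rewrite Aq_0 in H2.
    pose proof (tseq_bounds (rr n) j Hr). rewrite pow_half_S in *. lra.
Qed.

Lemma Sh_dead_ub m : forall k j, (j <= S m)%nat -> UBs (Sh m j) k <= (/2) ^ (S m - j) + (/2) ^ k.
Proof.
  induction k; intros j Hj.
  - pose proof (pow_half_pos (S m - j)). unfold UBs. simpl UB. change ((/2) ^ 0) with 1. lra.
  - destruct (Nat.eq_dec j (S m)).
    + subst. rewrite Nat.sub_diag. pose proof (UB_le1 (Sh m (S m)) (S k)).
      pose proof (pow_half_pos (S k)). simpl pow at 1. lra.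
    + rewrite UB_unfold by reflexivity. simpl tr.
      destruct (Nat.leb_spec j m); [|lia].
      rewrite UB_Dn. pose proof (IHk (S j) ltac:(lia)).
      replace (S m - j)%nat with (S (S m - S j)) by lia. rewrite !pow_half_S. lra.
Qed.

Lemma Zs_ub (Hact : forall n, act n = true -> 0 <= rr n < 1) :
  forall k m, (1 <= m)%nat -> UBs (Zs m) k <= 2 * (/2) ^ m + Ek k.
Proof.
  induction k; intros m Hm.
  - unfold UBs, Ek. simpl. pose proof (pow_half_pos m). lra.
  - rewrite UB_unfold by reflexivity. rewrite Ek_S. simpl tr.
    pose proof (IHk (S m) ltac:(lia)).
    destruct m as [|m']. lia.
    assert (UBs (if act (S m') then Sh (S m') 0 else Dn false) k <= (/2) ^ (S (S m')) + (/2) ^ k).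
    { destruct (act (S m')).
      - pose proof (Sh_dead_ub (S m') k 0 ltac:(lia)). rewrite Nat.sub_0_r in H0. exact H0.
      - rewrite UB_Dn. pose proof (pow_half_pos (S (S m'))). pose proof (pow_half_pos k). lra. }
    rewrite !pow_half_S in *. pose proof (pow_half_pos m'). lra.
Qed.

End Bounds.

Lemma le_div p a b : 0 < p -> p * a <= b -> a <= b / p.
Proof.
  intros Hp H. apply (Rmult_le_reg_r p); auto. unfold Rdiv.
  rewrite Rmult_assoc, Rinv_l by lra. lra.
Qed.

Lemma div_le p a b : 0 < p -> b <= p * a -> b / p <= a.
Proof.
  intros Hp H. apply (Rmult_le_reg_r p); auto. unfold Rdiv.
  rewrite Rmult_assoc, Rinv_l by lra. lra.
Qed.

Lemma lim_half_shift K : is_lim_seq (fun M => (/2) ^ (M - K)) 0.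
Proof.
  apply (is_lim_seq_incr_n _ K).
  eapply is_lim_seq_ext. intro n. replace (n + K - K)%nat with n by lia. reflexivity.
  apply is_lim_seq_geom. rewrite Rabs_pos_eq; lra.
Qed.

Lemma lim_from_bounds (v : nat -> R) r M0 K :
  (forall M, (M0 <= M)%nat -> r - (/2) ^ (M - K) <= v M <= r + (/2) ^ (M - K)) ->
  is_lim_seq v r.
Proof.
  intro H. apply (is_lim_seq_le_le_loc (fun M => r - (/2) ^ (M - K)) v (fun M => r + (/2) ^ (M - K))).
  - exists M0. intros M HM. apply H. exact HM.
  - replace (Finite r) with (Finite (r - 0)) by (f_equal; lra).
    apply is_lim_seq_minus'. apply is_lim_seq_const. apply lim_half_shift.
  - replace (Finite r) with (Finite (r + 0)) by (f_equal; lra).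
    apply is_lim_seq_plus'. apply is_lim_seq_const. apply lim_half_shift.
Qed.

Lemma Ek_bound k : Ek k <= 4 * (3/4) ^ k.
Proof.
  assert (H : INR (S k) <= 4 * (3/2) ^ k).
  { induction k. simpl. lra.
    rewrite S_INR. simpl pow. pose proof (pow_R1_Rle (3/2) k ltac:(lra)). lra. }
  unfold Ek. replace (3/4) with (3/2 * /2) by lra. rewrite Rpow_mult_distr.
  rewrite <- Rmult_assoc. apply Rmult_le_compat_r. apply pow_le; lra. exact H.
Qed.

Lemma Ek_lim : is_lim_seq Ek 0.
Proof.
  apply (is_lim_seq_le_le (fun _ => 0) Ek (fun k => 4 * (3/4) ^ k)).
  - intro k. split. apply Ek_nonneg. apply Ek_bound.
  - apply is_lim_seq_const.
  - replace (Finite 0) with (Rbar_mult 4 0) by (simpl; f_equal; ring).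
    apply is_lim_seq_scal_l. apply is_lim_seq_geom. rewrite Rabs_pos_eq; lra.
Qed.

Lemma le_Ek a b : (forall k, a <= b + Ek k) -> a <= b.
Proof.
  intro H. pose proof (is_lim_seq_le (fun _ => a) (fun k => b + Ek k) a (b + 0) H
    (is_lim_seq_const a) (is_lim_seq_plus' _ _ b 0 (is_lim_seq_const b) Ek_lim)).
  simpl in H0. lra.
Qed.

Lemma ge_Ek a b : (forall k, b - Ek k <= a) -> b <= a.
Proof.
  intro H. assert (b <= a + 0); [|lra]. apply le_Ek. intro k. specialize (H k).
  pose proof (Ek_nonneg k). lra.
Qed.

Lemma least_nat (P : nat -> Prop) : (exists i, P i) -> exists i, P i /\ forall k, (k < i)%nat -> ~ P k.
Proof.
  intros [i Hi]. apply NNPP. intro Hn.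
  assert (forall m k, (k <= m)%nat -> ~ P k).
  { induction m; intros k Hk HP.
    - apply Hn. exists k. split; auto. intros; lia.
    - apply Hn. exists k. split; auto. intros k' Hk'. apply IHm. lia. }
  apply (H i i (le_n i) Hi).
Qed.

Section Concrete.
Variable act : nat -> bool.
Variable rr : nat -> R.
Hypothesis Hact : forall n, act n = true -> 0 <= rr n < 1.

Definition stz (y : cantor) (m : nat) : stt := st stt (Zs 0) (tr act rr) y m.

Definition ratio (X : cantor -> Prop) (z : cantor) (M : nat) : R :=
  mu (fun x => X x /\ N (restr z M) x) / mu (N (restr z M)).

Variable X : cantor -> Prop.
Hypothesis Xin : forall y m, outp (stz y m) = Some true -> X y.
Hypothesis Xout : forall y m, X y -> outp (stz y m) <> Some false.

Lemma ratio_bounds z M k : LBs act rr (stz z M) k <= ratio X z M <= UBs act rr (stz z M) k.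
Proof.
  unfold ratio. rewrite mu_N_restr. pose proof (pow_half_pos M). split.
  - apply le_div; auto.
    apply (lower_bound stt (Zs 0) (tr act rr) outp (outp_her act rr)).
    intros y Hy Ho. split. eapply Xin; eauto. apply N_restr. exact Hy.
  - apply div_le; auto. eapply Rle_trans.
    2: apply (upper_bound stt (Zs 0) (tr act rr) outp (outp_her act rr) X k z M).
    + apply mu_mono. intros y [H1 H2]. split; auto. apply N_restr; auto.
    + intros y Hy HX. apply (Xout y (M + k) HX).
Qed.

Lemma dens_decided z m b : outp (stz z m) = Some b -> density_at X z (if b then 1 else 0).
Proof.
  intro H. unfold density_at. fold (ratio X z).
  apply (lim_from_bounds _ _ m 0). intros M HM.
  pose proof (out_her_m stt (Zs 0) (tr act rr) outp (outp_her act rr) z m M b H HM) as H'.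
  fold (stz z M) in H'.
  destruct (ratio_bounds z M 0) as [H1 H2].
  destruct (stz z M); try discriminate. simpl in H'. injection H' as ->.
  rewrite LB_Dn in H1. rewrite UB_Dn in H2. pose proof (pow_half_pos (M - 0)). lra.
Qed.

Lemma stz_S y m : stz y (S m) = tr act rr (stz y m) (y m).
Proof. reflexivity. Qed.

Lemma st_zero y m : (forall i, (i < m)%nat -> y i = false) -> stz y m = Zs m.
Proof.
  induction m; intro H. reflexivity.
  unfold stz. simpl. fold (stz y m). rewrite IHm by (intros; apply H; lia).
  rewrite H by lia. reflexivity.
Qed.

Lemma dens_zero : density_at X (fun _ => false) 0.
Proof.
  unfold density_at. fold (ratio X (fun _ => false)).
  apply (lim_from_bounds _ _ 1 1). intros M HM.
  pose proof (ratio_bounds (fun _ => false) M 0) as [H1 _].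
  pose proof (LB_nonneg stt (tr act rr) outp (stz (fun _ => false) M) 0).
  assert (ratio X (fun _ => false) M <= 2 * (/2) ^ M).
  { apply le_Ek. intro k. destruct (ratio_bounds (fun _ => false) M k) as [_ H2].
    rewrite st_zero in H2 by auto. eapply Rle_trans. exact H2. apply Zs_ub; auto. }
  assert (E : (/2) ^ M = (/2) ^ (M - 1) / 2).
  { replace M with (S (M - 1)) at 1 by lia. rewrite pow_half_S. reflexivity. }
  pose proof (pow_half_pos (M - 1)). unfold LBs in *. lra.
Qed.

Definition en (n : nat) : cantor := fun i => Nat.eqb i n.

Lemma st_en n j : (1 <= n)%nat -> act n = true -> stz (en n) (S n + j) = Sh n j.
Proof.
  intros Hn Ha. induction j.
  - rewrite Nat.add_0_r. unfold stz. simpl. fold (stz (en n) n).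
    rewrite st_zero. unfold en. rewrite Nat.eqb_refl. simpl.
    destruct n. lia. rewrite Ha. reflexivity.
    intros i Hi. unfold en. apply Nat.eqb_neq. lia.
  - rewrite Nat.add_succ_r, stz_S, IHj. unfold en.
    replace (Nat.eqb (S n + j) n) with false. reflexivity.
    symmetry. apply Nat.eqb_neq. lia.
Qed.

Lemma dens_en n : (1 <= n)%nat -> act n = true -> density_at X (en n) (rr n).
Proof.
  intros Hn Ha. pose proof (Hact n Ha) as Hr.
  unfold density_at. fold (ratio X (en n)).
  apply (lim_from_bounds _ _ (S n + S n) (S n)). intros M HM.
  remember (M - S n)%nat as j. replace M with (S n + j)%nat by lia.
  split.
  - assert (rr n - (/2) ^ j <= ratio X (en n) (S n + j)); [|lra].
    apply ge_Ek. intro k. destruct (ratio_bounds (en n) (S n + j) k) as [H1 _].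
    rewrite st_en in H1 by auto. eapply Rle_trans; [|exact H1].
    exact (Sh_lb act rr n Hr k j ltac:(lia)).
  - assert (ratio X (en n) (S n + j) <= rr n); [|pose proof (pow_half_pos j); lra].
    apply le_Ek. intro k. destruct (ratio_bounds (en n) (S n + j) k) as [_ H2].
    rewrite st_en in H2 by auto. eapply Rle_trans. exact H2. apply Sh_ub. exact Hr.
Qed.

End Concrete.

Section Final.
Variable act : nat -> bool.
Variable rr : nat -> R.
Hypothesis Hact : forall n, act n = true -> 0 <= rr n < 1.

Lemma stz_S' y m : stz act rr y (S m) = tr act rr (stz act rr y m) (y m).
Proof. reflexivity. Qed.

Lemma stz_her y m m' b : outp (stz act rr y m) = Some b -> (m <= m')%nat -> outp (stz act rr y m') = Some b.
Proof. apply (out_her_m stt (Zs 0) (tr act rr) outp (outp_her act rr)). Qed.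

Lemma Cm_term : forall d z p n j i, (j - i = d)%nat -> (i < j)%nat -> stz act rr z p = Cm n j i ->
  exists b, outp (stz act rr z (p + d)) = Some b.
Proof.
  induction d; intros z p n j i Hd Hij Hs. lia.
  assert (H : stz act rr z (S p) = Cm n j (S i) /\ (S i < j)%nat \/ exists b, outp (stz act rr z (S p)) = Some b).
  { rewrite stz_S', Hs, tr_Cm.
    destruct (digit (rr n) i), (z p), (Nat.eqb_spec (S i) j); simpl; eauto.
    all: left; split; auto; lia. }
  destruct H as [[H1 H2]|[b Hb]].
  - destruct (IHd z (S p) n j (S i) ltac:(lia) H2 H1) as [b Hb]. exists b.
    replace (p + S d)%nat with (S p + d)%nat by lia. exact Hb.
  - exists b. apply (stz_her z (S p)); auto. lia.
Qed.

Lemma classify z : (exists m b, outp (stz act rr z m) = Some b) \/ (forall i, z i = false) \/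
  (exists n, (1 <= n)%nat /\ act n = true /\ z = en n).
Proof.
  destruct (classic (exists m b, outp (stz act rr z m) = Some b)) as [Hd|Hd]; [left; exact Hd|right].
  destruct (classic (exists i, z i = true)) as [Hex|Hno].
  2: { left. intro i. destruct (z i) eqn:E; auto. exfalso; apply Hno; eauto. }
  right. destruct (least_nat _ Hex) as [n [Hn Hlt]].
  assert (Hz : stz act rr z n = Zs n).
  { apply st_zero. intros i Hi. specialize (Hlt i Hi). destruct (z i); auto. congruence. }
  assert (H1 : stz act rr z (S n) = tr act rr (Zs n) true) by (rewrite stz_S', Hz, Hn; reflexivity).
  destruct n as [|n'].
  { exfalso. apply Hd. exists 1%nat, true. rewrite H1. reflexivity. }
  destruct (act (S n')) eqn:Ha.
  2: { exfalso. apply Hd. exists (S (S n')), false. rewrite H1. simpl. rewrite Ha. reflexivity. }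
  set (N0 := S n') in *.
  assert (H1' : stz act rr z (S N0) = Sh N0 0) by (rewrite H1; simpl; rewrite Ha; reflexivity).
  destruct (classic (exists i, (N0 < i)%nat /\ z i = true)) as [Hex2|Hno2].
  - exfalso. destruct (least_nat _ Hex2) as [i0 [[Hi0 Hzi0] Hlt2]].
    set (j := (i0 - S N0)%nat).
    assert (Hsh : forall j', (j' <= j)%nat -> stz act rr z (S N0 + j') = Sh N0 j').
    { induction j'; intro Hj'. rewrite Nat.add_0_r. exact H1'.
      rewrite Nat.add_succ_r, stz_S', IHj' by lia.
      assert (z (S N0 + j')%nat = false).
      { destruct (z (S N0 + j')%nat) eqn:E; auto. exfalso. apply (Hlt2 (S N0 + j')%nat).
        unfold j in Hj'. lia. split. lia. exact E. }
      rewrite H. reflexivity. }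
    assert (Ei : (S N0 + j)%nat = i0) by (unfold j; lia).
    assert (Hs : stz act rr z (S (S N0 + j)) = tr act rr (Sh N0 j) true).
    { rewrite stz_S'. rewrite (Hsh j (le_n j)). rewrite Ei, Hzi0. reflexivity. }
    change (tr act rr (Sh N0 j) true) with (if Nat.leb j N0 then Dn false else Cm N0 j 0) in Hs. destruct (Nat.leb_spec j N0) as [Hle|Hgt].
    + apply Hd. exists (S (S N0 + j)), false. rewrite Hs. reflexivity.
    + destruct (Cm_term (j - 0) z (S (S N0 + j)) N0 j 0 eq_refl ltac:(lia) Hs) as [b Hb].
      apply Hd. eauto.
  - exists N0. split. unfold N0; lia. split. exact Ha.
    apply functional_extensionality. intro i. unfold en.
    destruct (Nat.eqb_spec i N0). subst. exact Hn.
    destruct (Nat.lt_ge_cases i N0).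
    + specialize (Hlt i H). destruct (z i); auto. congruence.
    + destruct (z i) eqn:E; auto. exfalso. apply Hno2. exists i. split; [lia|exact E].
Qed.

Lemma her_conflict y m1 m2 : outp (stz act rr y m1) = Some true -> outp (stz act rr y m2) = Some false -> False.
Proof.
  intros H1 H2. destruct (Nat.le_ge_cases m1 m2).
  - rewrite (stz_her y m1 m2 true H1 H) in H2. discriminate.
  - rewrite (stz_her y m2 m1 false H2 H) in H1. discriminate.
Qed.

Lemma dens_unique X z r1 r2 : density_at X z r1 -> density_at X z r2 -> r1 = r2.
Proof.
  intros H1 H2. apply is_lim_seq_unique in H1. apply is_lim_seq_unique in H2.
  rewrite H1 in H2. injection H2. auto.
Qed.

Variable SS : R -> Prop.
Hypothesis H1 : forall n, act n = true -> (1 <= n)%nat /\ SS (rr n).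
Hypothesis H2 : forall r, SS r -> exists n, act n = true /\ rr n = r.
Hypothesis H3 : forall n n', act n = true -> act n' = true -> rr n = rr n' -> n = n'.
Hypothesis HS01 : forall r, SS r -> 0 < r < 1.

Variable X : cantor -> Prop.
Hypothesis Xin : forall y m, outp (stz act rr y m) = Some true -> X y.
Hypothesis Xout : forall y m, X y -> outp (stz act rr y m) <> Some false.

Lemma dens_cases z r : density_at X z r ->
  r = 0 \/ r = 1 \/ exists n, act n = true /\ z = en n /\ r = rr n.
Proof.
  intro Hd. destruct (classify z) as [[m [b Hb]]|[Hz|[n [Hn [Ha ->]]]]].
  - pose proof (dens_decided act rr X Xin Xout z m b Hb) as H.
    rewrite (dens_unique X z r _ Hd H). destruct b; auto.
  - left. replace z with (fun _ : nat => false) in Hd by (apply functional_extensionality; intro; rewrite Hz; auto).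
    exact (dens_unique X _ r 0 Hd (dens_zero act rr Hact X Xin Xout)).
  - right; right. exists n. split; auto. split; auto.
    exact (dens_unique X _ r _ Hd (dens_en act rr Hact X Xin Xout n Hn Ha)).
Qed.

Lemma final_props : solid X /\ good_density SS X.
Proof.
  split; [|split].
  - intro z. destruct (classify z) as [[m [b Hb]]|[Hz|[n [Hn [Ha ->]]]]].
    + eexists. exact (dens_decided act rr X Xin Xout z m b Hb).
    + exists 0. replace z with (fun _ : nat => false) by (apply functional_extensionality; intro; rewrite Hz; auto).
      apply (dens_zero act rr Hact X Xin Xout).
    + eexists. apply (dens_en act rr Hact X Xin Xout n Hn Ha).
  - intro r. split.
    + intros [z Hz]. destruct (dens_cases z r Hz) as [->|[->|[n [Ha [_ ->]]]]]; auto.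
      left. apply H1, Ha.
    + intros [Hr|[->| ->]].
      * destruct (H2 r Hr) as [n [Ha <-]]. exists (en n). apply (dens_en act rr Hact X Xin Xout); auto; apply H1, Ha.
      * exists (fun _ => false). apply (dens_zero act rr Hact X Xin Xout).
      * exists (fun _ => true). apply (dens_decided act rr X Xin Xout _ 1%nat true). reflexivity.
  - intros r Hr. destruct (H2 r Hr) as [n [Ha Hrn]]. exists (en n). split.
    + rewrite <- Hrn. apply (dens_en act rr Hact X Xin Xout); auto; apply H1, Ha.
    + intros z Hz. destruct (dens_cases z r Hz) as [->|[->|[n' [Ha' [-> Hr']]]]].
      * specialize (HS01 0 Hr). lra.
      * specialize (HS01 1 Hr). lra.
      * f_equal. apply H3; auto. congruence.
Qed.

End Final.

Lemma stz_local act rr x y n : Cyl x n y -> stz act rr y n = stz act rr x n.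
Proof. apply st_local. Qed.

Theorem theorem3p11 :
  forall S : R -> Prop,
    countable_set S ->
    (forall r, S r -> 0 < r < 1) ->
    (exists A : cantor -> Prop, is_open A /\ solid A /\ good_density S A) /\
    (exists A : cantor -> Prop, is_closed A /\ solid A /\ good_density S A).
Proof.
  intros SS [f Hf] HS.
  set (P := fun n => (1 <= n)%nat /\ SS (f (n - 1)%nat) /\ forall m, (m < n - 1)%nat -> f m <> f (n - 1)%nat).
  set (act := fun n => if excluded_middle_informative (P n) then true else false).
  set (rr := fun n => f (n - 1)%nat).
  assert (Hacts : forall n, act n = true <-> P n).
  { intro n. unfold act. destruct excluded_middle_informative; split; auto; discriminate. }
  assert (Hact : forall n, act n = true -> 0 <= rr n < 1).
  { intros n Ha. apply Hacts in Ha. destruct Ha as [_ [Hs _]]. specialize (HS _ Hs). unfold rr. lra. }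
  assert (H1 : forall n, act n = true -> (1 <= n)%nat /\ SS (rr n)).
  { intros n Ha. apply Hacts in Ha. destruct Ha as [A [B _]]. split; auto. }
  assert (H2 : forall r, SS r -> exists n, act n = true /\ rr n = r).
  { intros r Hr. destruct (least_nat (fun m => f m = r) (Hf r Hr)) as [m0 [Hm0 Hlt]].
    exists (S m0). unfold rr. replace (S m0 - 1)%nat with m0 by lia. split; auto.
    apply Hacts. unfold P. replace (S m0 - 1)%nat with m0 by lia. split. lia. split.
    rewrite Hm0; auto. intros m Hm E. apply (Hlt m Hm). congruence. }
  assert (H3 : forall n n', act n = true -> act n' = true -> rr n = rr n' -> n = n').
  { intros n n' Ha Ha' E. apply Hacts in Ha, Ha'. destruct Ha as [A [_ C]], Ha' as [A' [_ C']].
    unfold rr in E. destruct (Nat.lt_trichotomy (n - 1) (n' - 1)) as [Hl|[He|Hl]].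
    - exfalso. apply (C' _ Hl). exact E.
    - lia.
    - exfalso. apply (C _ Hl). auto. }
  split.
  - exists (fun y => exists m, outp (stz act rr y m) = Some true). split; [|apply (final_props act rr Hact SS H1 H2 H3 HS)].
    + intros x [m Hm]. exists m. intros y Hy. exists m. rewrite (stz_local act rr x y m). exact Hm.
      apply N_restr. exact Hy.
    + intros y m Hm. eauto.
    + intros y m [m' Hm'] Hf'. exact (her_conflict act rr y m' m Hm' Hf').
  - exists (fun y => forall m, outp (stz act rr y m) <> Some false). split; [|apply (final_props act rr Hact SS H1 H2 H3 HS)].
    + intros x Hx. apply not_all_ex_not in Hx. destruct Hx as [m Hm]. apply NNPP in Hm.
      exists m. intros y Hy Hall. apply (Hall m). rewrite (stz_local act rr x y m). exact Hm.
      apply N_restr. exact Hy.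
    + intros y m Hm m' Hf'. exact (her_conflict act rr y m m' Hm Hf').
    + intros y m Hy. apply Hy.
Qed.
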